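(* There exist constants $c_1,c_2,c_3>0$ and, for every integer $t\ge1$, a graph $G_t$ with $n_t$ vertices and $m_t$ edges, where $c_1t\le n_t\le c_2t$ and $c_1t^2\le m_t\le c_2t^2$, together with an LA-succinct clique cover of $G_t$ whose admissibility sets $\mathcal{A}$ satisfy $\|\mathcal{A}\|\ge c_3\,n_tm_t$. In particular $\|\mathcal{A}\|=\Theta(nm)$ can occur.
   Context: All graphs are finite, simple, undirected, with no isolated vertices; $N[v]=N(v)\cup\{v\}$ is the closed neighbourhood. A clique is a vertex set inducing a complete subgraph. $\|\mathcal{F}\|:=\sum_{F\in\mathcal{F}}|F|$. A clique cover is an indexed family of cliques covering every edge. LA-succinct construction: maintain a family $\mathcal{C}$ of cliques of $G$, initially empty; an edge is uncovered if it is contained in no member. Update rule on an uncovered edge $\{u,v\}$: (1) if some $C_\ell\in\mathcal{C}$ has $C_\ell\cup\{u,v\}$ a clique of $G$, choose exactly one such $C_\ell$ and replace it by $C_\ell\cup\{u,v\}$; (2) otherwise add a new member $\{u,v\}$ with a new label. Step (1) is always applied when applicable. An LA-succinct clique cover is a clique cover obtained from the empty family by repeatedly applying this rule to uncovered edges (in any order). For a clique cover $\{C_\ell\}_{\ell\in I}$, the admissibility sets are $A_v:=\{\ell\in I: C_\ell\subseteq N[v]\}$, $v\in V$. *)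

(* Defs.v *)
From mathcomp Require Import all_boot all_order all_algebra.
Set Implicit Arguments. Unset Strict Implicit. Unset Printing Implicit Defensive.

Section Graphs.
Variable V : finType.
Variable E : rel V.

Definition simple_graph : Prop := irreflexive E /\ symmetric E.
Definition no_isolated : Prop := forall v : V, exists u : V, E v u.

Definition edges : {set {set V}} := [set [set x; y] | x in V, y in V & E x y].

Definition cnbhd (v : V) : {set V} := [set u | (u == v) || E v u].

Definition is_clique (C : {set V}) : bool :=
  [forall x in C, forall y in C, (x != y) ==> E x y].

(* A family of cliques indexed by labels 0..size s - 1 *)
Definition covered (s : seq {set V}) (u v : V) : bool :=
  has (fun C : {set V} => (u \in C) && (v \in C)) s.

Definition LA_step (s s' : seq {set V}) : Prop :=
  exists u v, E u v /\ ~~ covered s u v /\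
   ( (exists i, i < size s /\ is_clique (nth set0 s i :|: [set u; v]) /\
                s' = set_nth set0 s i (nth set0 s i :|: [set u; v]))
   \/ ((forall C, C \in s -> ~~ is_clique (C :|: [set u; v])) /\
       s' = rcons s [set u; v]) ).

Inductive LA_reachable : seq {set V} -> Prop :=
  | LA_nil : LA_reachable [::]
  | LA_cons s s' : LA_reachable s -> LA_step s s' -> LA_reachable s'.

Definition clique_cover (s : seq {set V}) : Prop :=
  (forall C, C \in s -> is_clique C) /\ (forall u v, E u v -> covered s u v).

Definition LA_succinct_cover (s : seq {set V}) : Prop :=
  LA_reachable s /\ clique_cover s.

Definition adm (s : seq {set V}) (v : V) : {set 'I_(size s)} :=
  [set l : 'I_(size s) | nth set0 s l \subset cnbhd v].

Definition adm_norm (s : seq {set V}) : nat := \sum_(v : V) #|adm s v|.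

End Graphs.

(* Main.v *)
Require Import Defs.
From mathcomp Require Import all_boot all_order all_algebra.
From mathcomp Require Import zify.
Set Implicit Arguments. Unset Strict Implicit. Unset Printing Implicit Defensive.

Section LA.
Variables (V : finType) (E : rel V).
Hypothesis hs : simple_graph E.

Definition unc (s : seq {set V}) := [set p : V * V | E p.1 p.2 && ~~ covered s p.1 p.2].
Definition allc (s : seq {set V}) := forall C, C \in s -> is_clique E C.

Lemma clique2 u v : E u v -> is_clique E [set u; v].
Proof.
case: hs => Hirr Hsym Euv.
apply/forallP => x; apply/implyP => Hx; apply/forallP => y; apply/implyP => Hy.
apply/implyP => Hne.
move: Hx Hy Hne; rewrite !in_set2 => /orP[]/eqP-> /orP[]/eqP->; rewrite ?eqxx //.
by rewrite (Hsym v u).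
Qed.

Lemma step_exists s u v : allc s -> (u, v) \in unc s ->
  exists s', LA_step E s s' /\ allc s' /\ unc s' \proper unc s.
Proof.
move=> Ha; rewrite inE /= => /andP[Euv Hnc].
case: (boolP [exists i : 'I_(size s), is_clique E (nth set0 s i :|: [set u; v])]).
- move/existsP=> [i Hi].
  set s' := set_nth set0 s i (nth set0 s i :|: [set u; v]).
  have Hsz : size s' = size s.
    by rewrite size_set_nth; apply/maxn_idPr; exact: ltn_ord.
  have Hmono : forall a b, covered s a b -> covered s' a b.
    move=> a b /(has_nthP set0) [k Hk /andP[Ha1 Hb1]].
    apply/(has_nthP set0); exists k; first by rewrite Hsz.
    rewrite nth_set_nth /=; case: eqP => [Eki|_]; last by rewrite Ha1 Hb1.
    by rewrite !in_setU -Eki Ha1 Hb1.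
  exists s'; split; [|split].
  + exists u, v; split => //; split => //; left; exists i; split => //.
  + move=> C /(nthP set0) [k Hk <-].
    rewrite nth_set_nth /=; case: eqP => _ //.
    apply: Ha; apply: mem_nth; by rewrite -Hsz.
  + apply/properP; split.
    * apply/subsetP => p; rewrite !inE => /andP[-> H] /=.
      by apply: contra H; apply: Hmono.
    * exists (u, v); first by rewrite inE /= Euv.
      rewrite inE /= negb_and negbK; apply/orP; right.
      apply/(has_nthP set0); exists i; first by rewrite Hsz.
      by rewrite nth_set_nth /= eqxx !inE !eqxx !orbT.
- rewrite negb_exists => /forallP Hno.
  set s' := rcons s [set u; v].
  have Hmono : forall a b, covered s a b -> covered s' a b.
    by move=> a b; rewrite /covered has_rcons => ->; rewrite orbT.
  exists s'; split; [|split].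
  + exists u, v; split => //; split => //; right; split => //.
    move=> C HC; have := Hno (Ordinal (etrans (index_mem C s) HC)).
    by rewrite /= nth_index //.
  + move=> C; rewrite mem_rcons in_cons => /orP[/eqP->|]; first exact: clique2.
    exact: Ha.
  + apply/properP; split.
    * apply/subsetP => p; rewrite !inE => /andP[-> H] /=.
      by apply: contra H; apply: Hmono.
    * exists (u, v); first by rewrite inE /= Euv.
      rewrite inE /= negb_and negbK; apply/orP; right.
      by rewrite /covered has_rcons !in_set2 !eqxx ?orbT.
Qed.

Lemma reach_cover : exists s, LA_succinct_cover E s.
Proof.
suff H : forall k s, LA_reachable E s -> allc s -> #|unc s| < k ->
  exists s', LA_succinct_cover E s'.
  apply: (H #|unc [::]|.+1 [::]) => //; first exact: LA_nil.
elim=> [|k IH] s Hr Ha Hk //.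
case: (set_0Vmem (unc s)) => [H0 | [[u v] Hp]].
- exists s; split => //; split => // a b Eab.
  apply/negPn/negP => Hn.
  have : (a, b) \in unc s by rewrite inE /= Eab.
  by rewrite H0 inE.
- have [s' [Hst [Ha' Hpr]]] := step_exists Ha Hp.
  apply: (IH s') => //; first exact: LA_cons Hr Hst.
  by have := proper_card Hpr; move: Hk; lia.
Qed.

End LA.

Section Main.
Variable t : nat.
Hypothesis ht : 0 < t.
Local Notation V := 'I_(3 * t).

Definition Eg : rel V := fun i j => (i != j) && ((i %% 3 == 0) || (i %% 3 != j %% 3)).

Lemma ltr3 (j : 'I_t) r : r < 3 -> 3 * j + r < 3 * t.
Proof. move=> Hr; have := ltn_ord j; lia. Qed.

Definition u0 (j : 'I_t) : V := Ordinal (ltr3 j (isT : 0 < 3)).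
Definition x1 (j : 'I_t) : V := Ordinal (ltr3 j (isT : 1 < 3)).
Definition y2 (j : 'I_t) : V := Ordinal (ltr3 j (isT : 2 < 3)).

Lemma m0 j : u0 j %% 3 = 0. Proof. rewrite /= ; lia. Qed.
Lemma m1 j : x1 j %% 3 = 1. Proof. rewrite /= ; lia. Qed.
Lemma m2 j : y2 j %% 3 = 2. Proof. rewrite /= ; lia. Qed.

Lemma neq_mod (a b : V) : a %% 3 != b %% 3 -> a != b.
Proof. by apply: contra => /eqP->. Qed.

Lemma simpleEg : simple_graph Eg.
Proof.
split; first by move=> i; rewrite /Eg eqxx.
move=> i j; rewrite /Eg eq_sym; congr (_ && _).
case: (eqVneq (i %% 3) (j %% 3)) => [E|Hne]; first by rewrite E.
by rewrite !orbT.
Qed.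

Definition j0 : 'I_t := Ordinal ht.

Lemma noisoEg : no_isolated Eg.
Proof.
move=> v; case: (eqVneq (v %% 3) 0) => Hv.
- exists (x1 j0); rewrite /Eg Hv /= ?andbT.
  by apply: neq_mod; rewrite Hv m1.
- exists (u0 j0); rewrite /Eg m0 Hv orbT andbT.
  by apply: neq_mod; rewrite m0.
Qed.

Lemma Eg_u0 j w : w != u0 j -> Eg (u0 j) w.
Proof. by move=> H; rewrite /Eg m0 eq_sym H. Qed.

Lemma clique_same (C : {set V}) a b :
  is_clique Eg C -> a \in C -> b \in C -> a %% 3 = b %% 3 -> a %% 3 != 0 -> a = b.
Proof.
move=> /forallP HC Ha Hb Hab Hnz.
have := HC a; rewrite Ha /= => /forallP /(_ b); rewrite Hb /=.
case: eqP => // _ /=; rewrite /Eg Hab eqxx orbF -Hab (negbTE Hnz) andbF //=.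
Qed.

Lemma x1_inj : injective x1.
Proof. move=> a b /(congr1 val) /= H; apply: val_inj => /=; lia. Qed.
Lemma y2_inj : injective y2.
Proof. move=> a b /(congr1 val) /= H; apply: val_inj => /=; lia. Qed.
Lemma u0_inj : injective u0.
Proof. move=> a b /(congr1 val) /= H; apply: val_inj => /=; lia. Qed.

Lemma Exy a b : Eg (x1 a) (y2 b).
Proof. by rewrite /Eg m1 m2 /= andbT; apply: neq_mod; rewrite m1 m2. Qed.

Lemma edges_lb : t * t <= #|edges Eg|.
Proof.
pose f := fun p : 'I_t * 'I_t => [set x1 p.1; y2 p.2].
have finj : injective f.
  move=> [a b] [a' b']; rewrite /f /= => H.
  have Ha : x1 a \in [set x1 a'; y2 b'] by rewrite -H set21.
  have Hb : y2 b \in [set x1 a'; y2 b'] by rewrite -H set22.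
  move: Ha Hb; rewrite !in_set2.
  have -> : (x1 a == y2 b') = false.
    by apply/negbTE/neq_mod; rewrite m1 m2.
  have -> : (y2 b == x1 a') = false.
    by apply/negbTE/neq_mod; rewrite m1 m2.
  by rewrite orbF /= => /eqP/x1_inj-> /eqP/y2_inj->.
have -> : t * t = #|f @: [set: 'I_t * 'I_t]|.
  by rewrite card_imset // cardsT card_prod card_ord.
apply: subset_leq_card; apply/subsetP => e /imsetP [[a b] _ ->].
apply/imset2P; exists (x1 a) (y2 b) => //.
by rewrite inE Exy.
Qed.

Lemma edges_ub : #|edges Eg| <= 9 * (t * t).
Proof.
pose f := fun p : V * V => [set p.1; p.2].
apply: (@leq_trans #|f @: [set: V * V]|).
  apply: subset_leq_card; apply/subsetP => e /imset2P [x y _ _ ->].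
  by apply/imsetP; exists (x, y).
apply: leq_trans (leq_imset_card _ _) _.
rewrite cardsT card_prod card_ord; lia.
Qed.

Section Cover.
Variable s : seq {set V}.
Hypothesis Hcov : clique_cover Eg s.

Lemma cov_xy a b : exists i : 'I_(size s), (x1 a \in nth set0 s i) && (y2 b \in nth set0 s i).
Proof.
case: Hcov => _ /(_ _ _ (Exy a b)) /(has_nthP set0) [k Hk H].
by exists (Ordinal Hk).
Qed.

Lemma size_pos : 0 < size s.
Proof. by have [i _] := cov_xy j0 j0; apply: leq_ltn_trans (ltn_ord i). Qed.

Definition g (p : 'I_t * 'I_t) : 'I_(size s) :=
  odflt (Ordinal size_pos) [pick i : 'I_(size s) | (x1 p.1 \in nth set0 s i) && (y2 p.2 \in nth set0 s i)].

Lemma g_spec p : (x1 p.1 \in nth set0 s (g p)) && (y2 p.2 \in nth set0 s (g p)).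
Proof.
rewrite /g; case: pickP => [i Hi|Hn] //=.
by have [i Hi] := cov_xy p.1 p.2; rewrite Hn in Hi.
Qed.

Lemma g_inj : injective g.
Proof.
move=> [a b] [a' b'] H.
have /andP [Ha Hb] := g_spec (a, b).
have /andP [Ha' Hb'] := g_spec (a', b').
rewrite H /= in Ha Hb.
have Cc : is_clique Eg (nth set0 s (g (a', b'))).
  case: Hcov => Hc _; apply: Hc; apply: mem_nth; exact: ltn_ord.
have /x1_inj -> := clique_same Cc Ha Ha' (etrans (m1 a) (esym (m1 a'))) ltac:(by rewrite m1).
by have /y2_inj -> := clique_same Cc Hb Hb' (etrans (m2 b) (esym (m2 b'))) ltac:(by rewrite m2).
Qed.

Lemma size_lb : t * t <= size s.
Proof. by have := leq_card _ g_inj; rewrite card_prod !card_ord. Qed.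

Lemma adm_u0 j : #|adm Eg s (u0 j)| = size s.
Proof.
have -> : adm Eg s (u0 j) = setT.
  apply/setP => i; rewrite !inE; apply/subsetP => w _.
  rewrite inE; case: eqVneq => //= H; exact: Eg_u0.
by rewrite cardsT card_ord.
Qed.

Lemma adm_lb : t * size s <= adm_norm Eg s.
Proof.
rewrite /adm_norm (bigID (mem [set u0 j | j : 'I_t])) /=.
apply: leq_trans (leq_addr _ _).
have -> : \sum_(i | i \in [set u0 j | j : 'I_t]) #|adm Eg s i|
        = \sum_(i | i \in [set u0 j | j : 'I_t]) size s.
  by apply: eq_bigr => i /imsetP [j _ ->]; rewrite adm_u0.
by rewrite sum_nat_const card_imset ?cardsT ?card_ord //; exact: u0_inj.
Qed.

End Cover.
End Main.

Import Order.TTheory GRing.Theory Num.Theory.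
Local Open Scope ring_scope.

Theorem mainTheorem16 :
  exists c1 c2 c3 : rat, 0 < c1 /\ 0 < c2 /\ 0 < c3 /\
  forall t : nat, (1 <= t)%N ->
  exists (n : nat) (E : rel 'I_n) (s : seq {set 'I_n}),
    simple_graph E /\ no_isolated E /\
    c1 * t%:R <= n%:R <= c2 * t%:R /\
    c1 * (t ^ 2)%:R <= #|edges E|%:R <= c2 * (t ^ 2)%:R /\
    LA_succinct_cover E s /\
    c3 * (n * #|edges E|)%:R <= (adm_norm E s)%:R.
Proof.
exists 1, 9%:R, (27%:R)^-1.
split; first exact: ltr01.
split; first by rewrite ltr0n.
split; first by rewrite invr_gt0 ltr0n.
move=> t ht.
have [s Hs] := reach_cover (@simpleEg t).
exists (3 * t)%N, (@Eg t), s.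
split; first exact: simpleEg.
split; first exact: noisoEg.
have Hlb := edges_lb ht.
have Hub := @edges_ub t ht.
have Hsz := size_lb ht (proj2 Hs).
have Had := @adm_lb t ht s.
have Ht2 : (t ^ 2 = t * t)%N by rewrite expnS expn1.
split.
  rewrite mul1r -natrM !ler_nat; apply/andP; split; lia.
split.
  rewrite mul1r -natrM !ler_nat Ht2; apply/andP; split; lia.
split; first exact: Hs.
rewrite ler_pdivrMl ?ltr0n // -natrM ler_nat.
have h1 := leq_mul (leqnn (3 * t)) Hub.
have h2 := leq_mul (leqnn (27 * t)) Hsz.
have h3 := leq_mul (leqnn 27) Had.
apply: leq_trans h1 _.
have -> : (3 * t * (9 * (t * t)) = 27 * t * (t * t))%N by rewrite !mulnA; lia.
apply: leq_trans h2 _.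
by rewrite -mulnA.
Qed.
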